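(* Let $I$ be a set of players with $|I|\ge2$ and $S$ a set of states of nature with $|S|\ge2$. Then there is no universal $\infty$-type space on $S$ for player set $I$, and there is no universal $*$-type space on $S$ for player set $I$.
   Context: An $\infty$-field on a nonempty set $M$ is a field of subsets closed under arbitrary intersections. For an $\infty$-field $\Sigma$ on $M$, $\Delta^\infty(M,\Sigma)$ is the set of finitely additive probability measures on $(M,\Sigma)$, endowed with the $\infty$-field generated by the sets $\{\mu:\mu(E)\ge p\}$, $E\in\Sigma$, $p\in[0,1]$. An $\infty$-type space on $S$ for $I$ is $\langle M,\Sigma,(T_i)_{i\in I},\theta\rangle$ with $M$ nonempty, $\Sigma$ an $\infty$-field on $M$, each $T_i:M\to\Delta^\infty(M,\Sigma)$ measurable such that for all $m\in M$, $A\in\Sigma$: $\{m':T_i(m')=T_i(m)\}\subseteq A$ implies $T_i(m)(A)=1$; and $\theta:M\to S$ $\Sigma$–$\mathrm{Pow}(S)$-measurable. A $*$-type space on $S$ for $I$ is $\langle M,(T_i)_{i\in I},\theta\rangle$ with $M$ nonempty, each $T_i$ a function from $M$ to finitely additive probability measures on $(M,\mathrm{Pow}(M))$ with $T_i(m)(\{m':T_i(m')=T_i(m)\})=1$, and $\theta:M\to S$ any function. A type morphism from $\langle M',\Sigma',(T'_i),\theta'\rangle$ to $\langle M,\Sigma,(T_i),\theta\rangle$ (for $*$-type spaces take $\Sigma=\mathrm{Pow}(M)$) is a $\Sigma'$–$\Sigma$-measurable $f:M'\to M$ with $\theta'(m')=\theta(f(m'))$ and $T_i(f(m'))(E)=T'_i(m')(f^{-1}(E))$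 for all $m'$, $E\in\Sigma$, $i\in I$. An $\infty$-type space (resp. $*$-type space) is universal if every $\infty$-type space (resp. $*$-type space) on $S$ for $I$ admits a unique type morphism into it. *)

(* Defs.v *)
From Stdlib Require Import Reals.
Open Scope R_scope.

Definition inf_field {M : Type} (Sig : (M -> Prop) -> Prop) : Prop :=
  Sig (fun _ => True) /\
  (forall A, Sig A -> Sig (fun x => ~ A x)) /\
  (forall A B, Sig A -> Sig B -> Sig (fun x => A x \/ B x)) /\
  (forall F : (M -> Prop) -> Prop, (forall A, F A -> Sig A) ->
     Sig (fun x => forall A, F A -> A x)).

(* A measure is encoded
   as a function on all subsets, normalised to be 0 outside Sig, so that such
   functions correspond bijectively to finitely additive probability measures
   on the field Sig. *)
Definition fa_prob {M : Type} (Sig : (M -> Prop) -> Prop)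
    (mu : (M -> Prop) -> R) : Prop :=
  (forall E, Sig E -> 0 <= mu E) /\
  mu (fun _ => True) = 1 /\
  (forall A B, Sig A -> Sig B -> (forall x, ~ (A x /\ B x)) ->
     mu (fun x => A x \/ B x) = mu A + mu B) /\
  (forall E, ~ Sig E -> mu E = 0).

Definition Delta_inf (M : Type) (Sig : (M -> Prop) -> Prop) : Type :=
  { mu : (M -> Prop) -> R | fa_prob Sig mu }.

Definition gen_inf_field {X : Type} (G : (X -> Prop) -> Prop) (A : X -> Prop)
  : Prop :=
  forall F : (X -> Prop) -> Prop, inf_field F -> (forall B, G B -> F B) -> F A.

Definition Delta_field (M : Type) (Sig : (M -> Prop) -> Prop) :
    (Delta_inf M Sig -> Prop) -> Prop :=
  gen_inf_field (fun B => exists (E : M -> Prop) (p : R),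
    Sig E /\ 0 <= p <= 1 /\ B = (fun mu => proj1_sig mu E >= p)).

Definition measurable_map {X Y : Type} (SX : (X -> Prop) -> Prop)
    (SY : (Y -> Prop) -> Prop) (f : X -> Y) : Prop :=
  forall B, SY B -> SX (fun x => B (f x)).

Definition inf_type_space (I S M : Type) (Sig : (M -> Prop) -> Prop)
    (T : I -> M -> Delta_inf M Sig) (theta : M -> S) : Prop :=
  inhabited M /\ inf_field Sig /\
  (forall i, measurable_map Sig (Delta_field M Sig) (T i)) /\
  (forall i m A, Sig A -> (forall m', T i m' = T i m -> A m') ->
     proj1_sig (T i m) A = 1) /\
  measurable_map Sig (fun _ : S -> Prop => True) theta.

Definition inf_type_morphism (I S M' M : Type)
    (Sig' : (M' -> Prop) -> Prop) (T' : I -> M' -> Delta_inf M' Sig') (theta' : M' -> S)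
    (Sig : (M -> Prop) -> Prop) (T : I -> M -> Delta_inf M Sig) (theta : M -> S)
    (f : M' -> M) : Prop :=
  measurable_map Sig' Sig f /\
  (forall m', theta' m' = theta (f m')) /\
  (forall i m' E, Sig E ->
     proj1_sig (T i (f m')) E = proj1_sig (T' i m') (fun x => E (f x))).

Definition inf_universal (I S M : Type) (Sig : (M -> Prop) -> Prop)
    (T : I -> M -> Delta_inf M Sig) (theta : M -> S) : Prop :=
  inf_type_space I S M Sig T theta /\
  forall (M' : Type) (Sig' : (M' -> Prop) -> Prop)
         (T' : I -> M' -> Delta_inf M' Sig') (theta' : M' -> S),
    inf_type_space I S M' Sig' T' theta' ->
    exists! f : M' -> M, inf_type_morphism I S M' M Sig' T' theta' Sig T theta f.

Definition pow_set {M : Type} : (M -> Prop) -> Prop := fun _ => True.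

Definition star_type_space (I S M : Type)
    (T : I -> M -> (M -> Prop) -> R) (theta : M -> S) : Prop :=
  inhabited M /\
  (forall i m, fa_prob (@pow_set M) (T i m)) /\
  (forall i m, T i m (fun m' => T i m' = T i m) = 1).

Definition star_type_morphism (I S M' M : Type)
    (T' : I -> M' -> (M' -> Prop) -> R) (theta' : M' -> S)
    (T : I -> M -> (M -> Prop) -> R) (theta : M -> S) (f : M' -> M) : Prop :=
  (forall m', theta' m' = theta (f m')) /\
  (forall i m' (E : M -> Prop), T i (f m') E = T' i m' (fun x => E (f x))).

Definition star_universal (I S M : Type)
    (T : I -> M -> (M -> Prop) -> R) (theta : M -> S) : Prop :=
  star_type_space I S M T theta /\
  forall (M' : Type) (T' : I -> M' -> (M' -> Prop) -> R) (theta' : M' -> S),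
    star_type_space I S M' T' theta' ->
    exists! f : M' -> M, star_type_morphism I S M' M T' theta' T theta f.

(* Main.v *)
Require Import Defs.
From Stdlib Require Import Reals List Lra.
From Stdlib Require Import Classical ClassicalEpsilon FunctionalExtensionality PropExtensionality ProofIrrelevance.
Open Scope R_scope.
Lemma set_ext {X : Type} (A B : X -> Prop) : (forall x, A x <-> B x) -> A = B.
Proof. intro H. apply functional_extensionality. intro x. apply propositional_extensionality. apply H. Qed.

Definition EMI (P : Prop) : {P} + {~ P} := excluded_middle_informative P.
Definition EMb (P : Prop) : bool := if EMI P then true else false.

Lemma EMb_true (P : Prop) : EMb P = true <-> P.
Proof. unfold EMb; destruct (EMI P); split; intros; auto; discriminate. Qed.

Lemma filter_len_add {X : Type} (f g h : X -> bool) (l : list X) :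
  (forall x, h x = orb (f x) (g x)) -> (forall x, f x = true -> g x = false) ->
  length (filter h l) = (length (filter f l) + length (filter g l))%nat.
Proof.
  intros Hh Hd. induction l as [|a l IH]; simpl; auto.
  rewrite Hh. destruct (f a) eqn:Ef; simpl.
  - rewrite (Hd a Ef). simpl. rewrite IH. reflexivity.
  - destruct (g a); simpl; rewrite IH; auto.
Qed.

Lemma filter_all_len {X : Type} (f : X -> bool) (l : list X) :
  (forall x, In x l -> f x = true) -> length (filter f l) = length l.
Proof.
  induction l as [|a l IH]; simpl; intros H; auto.
  rewrite (H a (or_introl eq_refl)). simpl. rewrite IH; auto.
Qed.

Lemma filter_len_pos {X : Type} (f : X -> bool) (l : list X) :
  (0 < length (filter f l))%nat <-> exists x, In x l /\ f x = true.
Proof.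
  induction l as [|a l IH]; simpl.
  - split; [intro H; inversion H | intros [x [[] _]]].
  - destruct (f a) eqn:Ef; simpl.
    + split; [intros _; exists a; auto | intros _; apply Nat.lt_0_succ].
    + rewrite IH. split.
      * intros [x [Hx Hf]]; exists x; auto.
      * intros [x [[<-|Hx] Hf]]; [congruence | exists x; auto].
Qed.


Lemma sig_eq {A : Type} {P : A -> Prop} (x y : {a | P a}) : proj1_sig x = proj1_sig y -> x = y.
Proof.
  destruct x as [x px], y as [y py]. simpl. intro e. subst y. f_equal. apply proof_irrelevance.
Qed.

Lemma fa_le1 {X : Type} (Sg : (X -> Prop) -> Prop) mu E :
  inf_field Sg -> fa_prob Sg mu -> Sg E -> 0 <= mu E <= 1.
Proof.
  intros [F1 [F2 [F3 F4]]] [H1 [H2 [H3 H4]]] HE. split; [auto|].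
  assert (e : mu (fun x => E x \/ ~ E x) = mu E + mu (fun y => ~ E y)).
  { apply H3; [exact HE | exact (F2 _ HE) | intros x [a b]; auto]. }
  assert (e2 : (fun x => E x \/ (fun y => ~ E y) x) = (fun _ : X => True)).
  { apply set_ext. intro x. split; auto. intros _. apply classic. }
  rewrite e2, H2 in e. pose proof (H1 _ (F2 _ HE)). lra.
Qed.

Lemma Delta_field_all (M : Type) (Sg : (M -> Prop) -> Prop) (Hf : inf_field Sg)
  (B : Delta_inf M Sg -> Prop) : Delta_field M Sg B.
Proof.
  intros F HF Hgen. destruct HF as [F1 [F2 [F3 F4]]].
  assert (Hsing : forall nu, F (fun mu => mu = nu)).
  { intro nu.
    pose (Fam := fun C : Delta_inf M Sg -> Prop => exists E p, Sg E /\ 0 <= p <= 1 /\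
       ((C = (fun mu => proj1_sig mu E >= p) /\ proj1_sig nu E >= p) \/
        (C = (fun mu => ~ proj1_sig mu E >= p) /\ ~ proj1_sig nu E >= p))).
    replace (fun mu => mu = nu) with (fun mu => forall C, Fam C -> C mu).
    - apply F4. intros C [E [p [HE [Hp [[-> _]|[-> _]]]]]].
      + apply Hgen. exists E, p. auto.
      + apply F2. apply Hgen. exists E, p. auto.
    - apply set_ext. intro mu. split.
      + intro H. apply sig_eq. apply functional_extensionality. intro E.
        destruct (classic (Sg E)) as [HE|HE].
        * pose proof (fa_le1 Sg _ E Hf (proj2_sig mu) HE) as Bm.
          pose proof (fa_le1 Sg _ E Hf (proj2_sig nu) HE) as Bn.
          assert (h1 : proj1_sig mu E >= proj1_sig nu E).
          { apply (H (fun mu => proj1_sig mu E >= proj1_sig nu E)).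
            exists E, (proj1_sig nu E). split; [exact HE|]. split; [exact Bn|].
            left. split; [reflexivity|]. lra. }
          assert (h2 : proj1_sig mu E <= proj1_sig nu E).
          { destruct (Rle_dec (proj1_sig mu E) (proj1_sig nu E)) as [r|r]; auto. exfalso.
            apply (H (fun mu0 => ~ proj1_sig mu0 E >= proj1_sig mu E)).
            - exists E, (proj1_sig mu E). split; [exact HE|]. split; [exact Bm|].
              right. split; [reflexivity|]. lra.
            - lra. }
          lra.
        * destruct (proj2_sig mu) as [_ [_ [_ Hm]]]. destruct (proj2_sig nu) as [_ [_ [_ Hn]]].
          rewrite Hm, Hn; auto.
      + intros -> C [E [p [_ [_ [[-> h]|[-> h]]]]]]; auto. }
  replace B with (fun mu => ~ (forall C, (exists nu, B nu /\ C = (fun mu0 => ~ mu0 = nu)) -> C mu)).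
  - apply F2. apply F4. intros C [nu [_ ->]]. apply F2. apply Hsing.
  - apply set_ext. intro mu. split.
    + intro H. apply NNPP. intro hb. apply H. intros C [nu [Bnu ->]]. intro e. subst. auto.
    + intros Bm H. apply (H (fun mu0 => ~ mu0 = mu)); auto. exists mu. auto.
Qed.

Section Core.
Variables (I S M : Type) (Sig : (M -> Prop) -> Prop) (T : I -> M -> (M -> Prop) -> R)
  (theta : M -> S) (i j : I) (s t : S).
Hypothesis hij : i <> j.
Hypothesis hst : s <> t.
Hypothesis Hfield : inf_field Sig.
Hypothesis Hfa : forall k m, fa_prob Sig (T k m).
Hypothesis Hintro : forall k m A, Sig A -> (forall x, T k x = T k m -> A x) -> T k m A = 1.
Hypothesis HmeasT : forall k (B : ((M -> Prop) -> R) -> Prop), Sig (fun m => B (T k m)).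
Hypothesis Hmeastheta : forall B : S -> Prop, Sig (fun m => B (theta m)).

Definition JT := { q : (M -> Prop) -> R | exists b, T j b = q }.
Definition Wq (q : JT) (l : list M) : Prop := exists b, In b l /\ T j b = proj1_sig q.

Variable U : (JT -> Prop) -> (list M -> Prop) -> Prop.
Hypothesis HUT : forall A, U A (fun _ => True).
Hypothesis HUI : forall A X Z, U A X -> U A Z -> exists y, X y /\ Z y.
Hypothesis HUS : forall A X Z, U A X -> (forall y, X y -> Z y) -> U A Z.
Hypothesis HUU : forall A X Z, U A (fun y => X y \/ Z y) -> U A X \/ U A Z.
Hypothesis HUpos : forall A q, A q -> U A (Wq q).
Hypothesis HUneg : forall A q, ~ A q -> U A (fun l => ~ Wq q l).

Inductive N : Type :=
  | Old (m : M)
  | Zp (A : JT -> Prop) (l : list M)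
  | Vp (l : list M) (o : option M).

Definition Sig' (E : N -> Prop) : Prop := Sig (fun m => E (Old m)).
Definition norm (mu : (N -> Prop) -> R) : (N -> Prop) -> R :=
  fun E => if EMI (Sig' E) then mu E else 0.
Definition pushT (k : I) (m : M) : (N -> Prop) -> R := fun E => T k m (fun x => E (Old x)).
Definition dirac (n : N) : (N -> Prop) -> R := fun E => if EMI (E n) then 1 else 0.
Definition posl (l : list M) : list (option M) := None :: map Some l.
Definition cnt (l : list M) (E : N -> Prop) : nat :=
  length (filter (fun o => EMb (E (Vp l o))) (posl l)).
Definition eta (l : list M) : (N -> Prop) -> R :=
  fun E => INR (cnt l E) / INR (length (posl l)).
Definition xi (A : JT -> Prop) : (N -> Prop) -> R :=
  fun E => if EMI (U A (fun l' => E (Zp A l'))) then 1 else 0.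

Definition raw (k : I) (n : N) : (N -> Prop) -> R :=
  match n with
  | Old m => pushT k m
  | Zp A l => if EMI (k = i) then eta l else if EMI (k = j) then xi A else dirac (Zp A l)
  | Vp l o => if EMI (k = i) then eta l else if EMI (k = j) then
                (match o with Some b => pushT j b | None => dirac (Vp l None) end)
              else dirac (Vp l o)
  end.

Definition T' (k : I) (n : N) := norm (raw k n).

Definition theta' (n : N) : S :=
  match n with Old m => theta m | Zp _ _ => s | Vp _ None => t | Vp _ (Some _) => s end.

Lemma raw_iZ A l : raw i (Zp A l) = eta l.
Proof. simpl. destruct (EMI (i = i)); congruence. Qed.
Lemma raw_jZ A l : raw j (Zp A l) = xi A.
Proof. simpl. destruct (EMI (j = i)); [congruence|]. destruct (EMI (j = j)); congruence. Qed.
Lemma raw_iV l o : raw i (Vp l o) = eta l.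
Proof. simpl. destruct (EMI (i = i)); congruence. Qed.
Lemma raw_jVS l b : raw j (Vp l (Some b)) = pushT j b.
Proof. simpl. destruct (EMI (j = i)); [congruence|]. destruct (EMI (j = j)); congruence. Qed.
Lemma raw_jVN l : raw j (Vp l None) = dirac (Vp l None).
Proof. simpl. destruct (EMI (j = i)); [congruence|]. destruct (EMI (j = j)); congruence. Qed.
Lemma raw_oZ k A l : k <> i -> k <> j -> raw k (Zp A l) = dirac (Zp A l).
Proof. intros; simpl. destruct (EMI (k = i)); [congruence|]. destruct (EMI (k = j)); congruence. Qed.
Lemma raw_oV k l o : k <> i -> k <> j -> raw k (Vp l o) = dirac (Vp l o).
Proof. intros; simpl. destruct (EMI (k = i)); [congruence|]. destruct (EMI (k = j)); congruence. Qed.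

Lemma norm_eq mu E : Sig' E -> norm mu E = mu E.
Proof. intro H. unfold norm. destruct (EMI (Sig' E)); tauto. Qed.

Definition pre (mu : (N -> Prop) -> R) : Prop :=
  (forall E, Sig' E -> 0 <= mu E) /\ mu (fun _ => True) = 1 /\
  (forall A B, Sig' A -> Sig' B -> (forall x, ~ (A x /\ B x)) ->
     mu (fun x => A x \/ B x) = mu A + mu B).

Lemma norm_fa mu : pre mu -> fa_prob Sig' (norm mu).
Proof.
  intros [H1 [H2 H3]]. destruct Hfield as [F1 [F2 [F3 F4]]].
  split; [|split; [|split]].
  - intros E HE. rewrite norm_eq; auto.
  - rewrite norm_eq; auto.
  - intros A B HA HB HAB. rewrite !norm_eq; auto. apply F3; auto.
  - intros E HE. unfold norm. destruct (EMI (Sig' E)); tauto.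
Qed.

Lemma pre_push (mu : (M -> Prop) -> R) : fa_prob Sig mu ->
  pre (fun E => mu (fun x => E (Old x))).
Proof.
  intros [H1 [H2 [H3 H4]]]. split; [|split].
  - intros E HE. apply H1, HE.
  - apply H2.
  - intros A B HA HB HAB. apply H3; auto.
Qed.

Lemma pre_dirac n : pre (dirac n).
Proof.
  unfold dirac; split; [|split].
  - intros E _. destruct (EMI (E n)); lra.
  - destruct (EMI True); tauto.
  - intros A B _ _ HAB. destruct (EMI (A n \/ B n)) as [h|h], (EMI (A n)) as [ha|ha], (EMI (B n)) as [hb|hb].
    all: try lra.
    all: exfalso; firstorder.
Qed.

Lemma posl_len l : INR (length (posl l)) > 0.
Proof. unfold posl. simpl length. apply lt_0_INR. apply Nat.lt_0_succ. Qed.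

Lemma eta_all l E : (forall o, In o (posl l) -> E (Vp l o)) -> eta l E = 1.
Proof.
  intro H. unfold eta, cnt. rewrite filter_all_len.
  - pose proof (posl_len l). field. lra.
  - intros o Ho. apply EMb_true. auto.
Qed.

Lemma pre_eta l : pre (eta l).
Proof.
  split; [|split].
  - intros E _. unfold eta. pose proof (posl_len l). pose proof (pos_INR (cnt l E)).
    apply Rmult_le_pos; auto. left. apply Rinv_0_lt_compat. lra.
  - apply eta_all. intros; trivial.
  - intros A B _ _ HAB. unfold eta, cnt.
    rewrite (filter_len_add (fun o => EMb (A (Vp l o))) (fun o => EMb (B (Vp l o)))).
    + rewrite plus_INR. pose proof (posl_len l). field. lra.
    + intros o. unfold EMb. destruct (EMI (A (Vp l o) \/ B (Vp l o))), (EMI (A (Vp l o))),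
        (EMI (B (Vp l o))); simpl; tauto.
    + intros o. unfold EMb. destruct (EMI (A (Vp l o))), (EMI (B (Vp l o))); try discriminate;
        auto. exfalso; apply (HAB (Vp l o)); auto.
Qed.

Lemma pre_xi A : pre (xi A).
Proof.
  unfold xi; split; [|split].
  - intros E _. destruct (EMI _); lra.
  - destruct (EMI _) as [_|n]; [auto|exfalso; apply n, HUT].
  - intros X Z _ _ HXZ.
    destruct (EMI (U A (fun l' => X (Zp A l') \/ Z (Zp A l')))) as [h|h];
    destruct (EMI (U A (fun l' => X (Zp A l')))) as [hx|hx];
    destruct (EMI (U A (fun l' => Z (Zp A l')))) as [hz|hz]; try lra.
    all: exfalso.
    all: first
      [ destruct (HUI _ _ _ hx hz) as [y [h1 h2]]; apply (HXZ (Zp A y)); auto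
      | destruct (HUU _ _ _ h); tauto
      | apply h; apply (HUS _ _ _ hx); auto
      | apply h; apply (HUS _ _ _ hz); auto ].
Qed.

Lemma pre_raw k n : pre (raw k n).
Proof.
  destruct n as [m|A l|l o]; simpl.
  - apply pre_push, Hfa.
  - destruct (EMI (k = i)); [apply pre_eta|]. destruct (EMI (k = j)); [apply pre_xi|apply pre_dirac].
  - destruct (EMI (k = i)); [apply pre_eta|]. destruct (EMI (k = j)); [|apply pre_dirac].
    destruct o; [apply pre_push, Hfa|apply pre_dirac].
Qed.

Lemma T'_fa k n : fa_prob Sig' (T' k n).
Proof. apply norm_fa, pre_raw. Qed.

Lemma N_intro k n A : Sig' A -> (forall n', T' k n' = T' k n -> A n') -> T' k n A = 1.
Proof.
  intros HA H. unfold T'. rewrite norm_eq; auto.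
  assert (Hdir : forall n0, raw k n0 = dirac n0 -> n0 = n -> dirac n0 A = 1).
  { intros n0 _ ->. unfold dirac. destruct (EMI (A n)) as [|h]; auto. exfalso; apply h, H; auto. }
  destruct n as [m|A0 l|l o].
  - simpl. unfold pushT. apply Hintro; auto. intros x Hx. apply H.
    unfold T'. simpl. unfold pushT. rewrite Hx. reflexivity.
  - destruct (EMI (k = i)) as [->|ni].
    + rewrite raw_iZ. apply eta_all. intros o _. apply H. unfold T'. rewrite raw_iV, raw_iZ. auto.
    + destruct (EMI (k = j)) as [->|nj].
      * rewrite raw_jZ. unfold xi. destruct (EMI _) as [|h]; auto. exfalso; apply h.
        apply (HUS _ _ _ (HUT A0)). intros y _. apply H. unfold T'. rewrite !raw_jZ. auto.
      * rewrite raw_oZ; auto. apply Hdir; auto. apply raw_oZ; auto.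
  - destruct (EMI (k = i)) as [->|ni].
    + rewrite raw_iV. apply eta_all. intros o' _. apply H. unfold T'. rewrite !raw_iV. auto.
    + destruct (EMI (k = j)) as [->|nj].
      * destruct o as [b|].
        -- rewrite raw_jVS. unfold pushT. apply Hintro; auto. intros x Hx. apply H.
           unfold T'. rewrite raw_jVS. simpl. unfold pushT. rewrite Hx. reflexivity.
        -- rewrite raw_jVN. apply Hdir; auto. apply raw_jVN.
      * rewrite raw_oV; auto. apply Hdir; auto. apply raw_oV; auto.
Qed.


Lemma Sig_and (A B : M -> Prop) : Sig A -> Sig B -> Sig (fun x => A x /\ B x).
Proof.
  intros HA HB. destruct Hfield as [F1 [F2 [F3 F4]]].
  replace (fun x => A x /\ B x) with (fun x => ~ ((fun y => ~ A y) x \/ (fun y => ~ B y) x)).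
  - apply F2. apply F3; apply F2; auto.
  - apply set_ext. intro x. tauto.
Qed.

Section Morph.
Variable u : N -> M.
Hypothesis Ha : forall m, u (Old m) = m.
Hypothesis Hb : forall n, theta (u n) = theta' n.
Hypothesis Hc : forall k n E, Sig E -> T k (u n) E = T' k n (fun x => E (u x)).
Hypothesis Hd : forall E, Sig E -> Sig' (fun x => E (u x)).

Lemma TjV l b : T j (u (Vp l (Some b))) = T j b.
Proof.
  apply functional_extensionality. intro E. destruct (classic (Sig E)) as [HE|HE].
  - rewrite Hc; auto. unfold T'. rewrite norm_eq; auto. rewrite raw_jVS. unfold pushT.
    f_equal. apply functional_extensionality. intro x. rewrite Ha. reflexivity.
  - destruct (Hfa j (u (Vp l (Some b)))) as [_ [_ [_ H1]]].
    destruct (Hfa j b) as [_ [_ [_ H2]]]. rewrite H1, H2; auto.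
Qed.

Definition Qs (q : JT) : M -> Prop := fun p => T j p = proj1_sig q /\ theta p = s.
Definition Fs (q : JT) : M -> Prop := fun p => T i p (Qs q) > 0.

Lemma Sig_Qs q : Sig (Qs q).
Proof. apply Sig_and; [apply (HmeasT j (fun mu => mu = proj1_sig q)) | apply (Hmeastheta (fun x => x = s))]. Qed.

Lemma Sig_Fs q : Sig (Fs q).
Proof. apply (HmeasT i (fun mu => mu (Qs q) > 0)). Qed.

Lemma ZinF A l q : Fs q (u (Zp A l)) <-> Wq q l.
Proof.
  unfold Fs. rewrite Hc by apply Sig_Qs. unfold T'. rewrite norm_eq by (apply Hd, Sig_Qs).
  rewrite raw_iZ. unfold eta.
  pose proof (posl_len l) as Hp.
  assert (E1 : INR (cnt l (fun x => Qs q (u x))) / INR (length (posl l)) > 0 <->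
               (0 < cnt l (fun x => Qs q (u x)))%nat).
  { split; intro H.
    - destruct (cnt l (fun x => Qs q (u x))) eqn:Ec; [|apply Nat.lt_0_succ].
      simpl in H. unfold Rdiv in H. rewrite Rmult_0_l in H. lra.
    - apply lt_INR in H. simpl in H. unfold Rdiv. apply Rmult_lt_0_compat; auto.
      apply Rinv_0_lt_compat; lra. }
  rewrite E1. unfold cnt. rewrite filter_len_pos. split.
  - intros [o [Ho Hq]]. apply (proj1 (EMb_true _)) in Hq. destruct Hq as [Hq1 Hq2].
    rewrite Hb in Hq2. destruct o as [b|]; simpl in Hq2; [|congruence].
    exists b. split.
    + unfold posl in Ho. destruct Ho as [Ho|Ho]; [discriminate|].
      apply in_map_iff in Ho. destruct Ho as [b' [e Hb']]. injection e; intros; subst; auto.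
    + rewrite <- Hq1. symmetry. apply TjV.
  - intros [b [Hbl Hbq]]. exists (Some b). split.
    + right. apply in_map. auto.
    + apply (proj2 (EMb_true _)). split.
      * rewrite TjV. auto.
      * rewrite Hb. reflexivity.
Qed.

Definition G (A : JT -> Prop) : (M -> Prop) -> R := T j (u (Zp A nil)).

Lemma G_F A q : G A (Fs q) = if EMI (U A (Wq q)) then 1 else 0.
Proof.
  unfold G. rewrite Hc by apply Sig_Fs. unfold T'. rewrite norm_eq by (apply Hd, Sig_Fs).
  rewrite raw_jZ. unfold xi.
  replace (fun l' => Fs q (u (Zp A l'))) with (Wq q); auto.
  apply set_ext. intro l'. rewrite ZinF. tauto.
Qed.

Lemma U_iff A q : U A (Wq q) <-> A q.
Proof.
  split; intro H.
  - destruct (classic (A q)) as [h|h]; auto. destruct (HUI _ _ _ H (HUneg A q h)) as [y [h1 h2]]. tauto.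
  - apply HUpos; auto.
Qed.

Lemma core_false : False.
Proof.
  pose (G' := fun A : JT -> Prop => exist (fun q => exists b, T j b = q) (G A)
                 (ex_intro _ (u (Zp A nil)) eq_refl) : JT).
  assert (inj : forall A B, G' A = G' B -> forall q, A q <-> B q).
  { intros A B e q. assert (e' : G A = G B) by (apply (f_equal (@proj1_sig _ _) e)).
    pose proof (f_equal (fun f => f (Fs q)) e') as e2. simpl in e2. rewrite !G_F in e2.
    rewrite <- (U_iff A q), <- (U_iff B q).
    destruct (EMI (U A (Wq q))), (EMI (U B (Wq q))); try tauto; exfalso; lra. }
  pose (D := fun q => exists A, G' A = q /\ ~ A q).
  destruct (classic (D (G' D))) as [h|h].
  - destruct h as [A [e nA]]. apply nA. apply (inj A D e). exists A. auto.
  - apply h. exists D. split; auto.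
Qed.

End Morph.

Definition Pmor (f : M -> M) : Prop :=
  (forall m, theta m = theta (f m)) /\
  (forall k m E, Sig E -> T k (f m) E = T k m (fun x => E (f x))) /\
  (forall E, Sig E -> Sig (fun x => E (f x))).

Lemma from_univ (u : N -> M)
  (Hb : forall n, theta (u n) = theta' n)
  (Hc : forall k n E, Sig E -> T k (u n) E = T' k n (fun x => E (u x)))
  (Hd : forall E, Sig E -> Sig' (fun x => E (u x)))
  (uniq : forall f g, Pmor f -> Pmor g -> f = g) : False.
Proof.
  assert (Ha : forall m, u (Old m) = m).
  { assert (e : (fun m => u (Old m)) = (fun m => m)).
    { apply uniq.
      - split; [|split].
        + intro m. rewrite Hb. reflexivity.
        + intros k m E HE. rewrite Hc; auto. unfold T'. rewrite norm_eq; auto.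
        + intros E HE. apply Hd; auto.
      - split; [|split]; intros; auto. }
    intro m. exact (f_equal (fun f => f m) e). }
  exact (core_false u Ha Hb Hc Hd).
Qed.

Lemma fa_prob_ext {X : Type} (P Q : (X -> Prop) -> Prop) mu :
  (forall E, P E <-> Q E) -> fa_prob P mu -> fa_prob Q mu.
Proof.
  intros H [H1 [H2 [H3 H4]]]. split; [|split; [|split]].
  - intros E HE. apply H1, H, HE.
  - auto.
  - intros A B HA HB. apply H3; apply H; auto.
  - intros E HE. apply H4. rewrite H. auto.
Qed.

Lemma star_case (m0 : M) (HSig : forall E, Sig E) :
  star_universal I S M T theta -> False.
Proof.
  intros [Hsp Hu].
  assert (HN : star_type_space I S N T' theta').
  { split; [constructor; exact (Old m0)|split].
    - intros k n. apply (fa_prob_ext Sig'); [intro E; split; intros; [constructor|apply HSig]|].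
      apply T'_fa.
    - intros k n. apply N_intro; [apply HSig|]. auto. }
  destruct (Hu N T' theta' HN) as [u [[Hb Hc] _]].
  apply (from_univ u).
  - intro n. rewrite Hb. auto.
  - intros k n E _. apply Hc.
  - intros E _. apply HSig.
  - intros f g Hf Hg. destruct (Hu M T theta Hsp) as [f0 [_ H0]].
    assert (forall h, Pmor h -> f0 = h).
    { intros h [h1 [h2 h3]]. apply H0. split; auto. }
    transitivity f0; [symmetry|]; auto.
Qed.

Lemma Sig'_field : inf_field Sig'.
Proof.
  destruct Hfield as [F1 [F2 [F3 F4]]]. unfold Sig'. split; [|split; [|split]].
  - exact F1.
  - intros A HA. apply F2. exact HA.
  - intros A B HA HB. apply F3; auto.
  - intros F HF.
    replace (fun m => forall A, F A -> A (Old m)) with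
      (fun m => forall C, (exists A, F A /\ C = (fun x => A (Old x))) -> C m).
    + apply F4. intros C [A [HA ->]]. apply HF, HA.
    + apply set_ext. intro m. split.
      * intros H A HA. apply (H (fun x => A (Old x))). exists A. auto.
      * intros H C [A [HA ->]]. apply H, HA.
Qed.

Definition T'inf (k : I) (n : N) : Delta_inf N Sig' := exist _ (T' k n) (T'_fa k n).

Definition Phi (mu : Delta_inf M Sig) : Delta_inf N Sig' :=
  exist _ (norm (fun E => proj1_sig mu (fun x => E (Old x))))
    (norm_fa _ (pre_push _ (proj2_sig mu))).

Lemma inf_case (Tinf : I -> M -> Delta_inf M Sig)
  (HT : forall k m, proj1_sig (Tinf k m) = T k m) :
  inf_universal I S M Sig Tinf theta -> False.
Proof.
  intros [Hsp Hu].
  assert (HN : inf_type_space I S N Sig' T'inf theta').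
  { pose proof Hsp as Hsp0. destruct Hsp0 as [[m0] _]. split; [constructor; exact (Old m0)|split; [apply Sig'_field|split; [|split]]].
    - intros k B _. unfold Sig'.
      replace (fun m => B (T'inf k (Old m))) with (fun m => B (Phi (Tinf k m))).
      + destruct Hsp as [_ [_ [Hm _]]]. apply (Hm k (fun mu => B (Phi mu))).
        apply Delta_field_all. exact Hfield.
      + apply set_ext. intro m. replace (Phi (Tinf k m)) with (T'inf k (Old m)); [tauto|].
        apply sig_eq. simpl. unfold T', raw, pushT. rewrite HT. reflexivity.
    - intros k n A HA H. simpl. apply N_intro; auto. intros n' e. apply H. apply sig_eq. exact e.
    - intros B _. unfold Sig'. apply (Hmeastheta B). }
  destruct (Hu N Sig' T'inf theta' HN) as [u [[Hd [Hb Hc]] _]].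
  apply (from_univ u).
  - intro n. rewrite Hb. auto.
  - intros k n E HE. rewrite <- HT. apply Hc. auto.
  - exact Hd.
  - intros f g Hf Hg. destruct (Hu M Sig Tinf theta Hsp) as [f0 [_ H0]].
    assert (forall h, Pmor h -> f0 = h).
    { intros h [h1 [h2 h3]]. apply H0. split; [|split]; auto.
      intros k m E HE. rewrite !HT. auto. }
    transitivity f0; [symmetry|]; auto.
Qed.

End Core.

From mathcomp Require classical_sets filter.

Lemma ultra_exists (Y : Type) (R0 : (Y -> Prop) -> Prop)
  (fip : forall L : list (Y -> Prop), (forall Z, In Z L -> R0 Z) ->
          exists y, forall Z, In Z L -> Z y) :
  exists U : (Y -> Prop) -> Prop,
    (forall X, R0 X -> U X) /\ U (fun _ => True) /\
    (forall X Z, U X -> U Z -> exists y, X y /\ Z y) /\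
    (forall X Z, U X -> (forall y, X y -> Z y) -> U Z) /\
    (forall X Z, U (fun y => X y \/ Z y) -> U X \/ U Z).
Proof.
  pose (F0 := fun X : Y -> Prop => exists L : list (Y -> Prop),
     (forall Z, In Z L -> R0 Z) /\ (forall y, (forall Z, In Z L -> Z y) -> X y)).
  assert (FF : @filter.ProperFilter Y F0).
  { apply filter.Build_ProperFilter_ex.
    - intros P [L [HL HP]]. destruct (fip L HL) as [y Hy]. exists y. apply HP, Hy.
    - constructor.
      + exists nil. split; [intros Z []|]. intros; exact I.
      + intros A B [L1 [H1 H1']] [L2 [H2 H2']]. exists (L1 ++ L2). split.
        * intros Z HZ. apply in_app_or in HZ. destruct HZ; auto.
        * intros y Hy. split; [apply H1'|apply H2']; intros Z HZ; apply Hy, in_or_app; auto.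
      + intros P Q PQ [L [HL HP]]. exists L. split; auto. }
  destruct (filter.ultraFilterLemma FF) as [G [UG sub]].
  exists G.
  pose proof (@filter.ultra_proper _ _ UG) as PG.
  pose proof (@filter.filter_filter _ _ PG) as FG.
  split; [|split; [|split; [|split]]].
  - intros X HX. apply sub. exists (X :: nil). split.
    + intros Z [<-|[]]; auto.
    + intros y Hy. apply Hy. left; reflexivity.
  - exact (@filter.filterT _ _ FG).
  - intros X Z HX HZ. pose proof (@filter.filterI _ _ FG X Z HX HZ) as HI.
    destruct (@filter.filter_ex _ _ PG _ HI) as [y Hy]. exists y. exact Hy.
  - intros X Z HX HXZ. exact (@filter.filterS _ _ FG X Z HXZ HX).
  - intros X Z HXZ.
    destruct (filter.in_ultra_setVsetC X UG) as [h|hX]; [left; exact h|].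
    destruct (filter.in_ultra_setVsetC Z UG) as [h|hZ]; [right; exact h|].
    exfalso.
    pose proof (@filter.filterI _ _ FG _ _ hX hZ) as H1.
    pose proof (@filter.filterI _ _ FG _ _ H1 HXZ) as H2.
    destruct (@filter.filter_ex _ _ PG _ H2) as [y [[h1 h2] h3]].
    destruct h3; auto.
Qed.

Lemma exists_U (I M : Type) (T : I -> M -> (M -> Prop) -> R) (j : I) :
  exists U : (JT I M T j -> Prop) -> (list M -> Prop) -> Prop,
   (forall A, U A (fun _ => True)) /\
   (forall A X Z, U A X -> U A Z -> exists y, X y /\ Z y) /\
   (forall A X Z, U A X -> (forall y, X y -> Z y) -> U A Z) /\
   (forall A X Z, U A (fun y => X y \/ Z y) -> U A X \/ U A Z) /\
   (forall A q, A q -> U A (Wq I M T j q)) /\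
   (forall A q, ~ A q -> U A (fun l => ~ Wq I M T j q l)).
Proof.
  assert (H : forall A : JT I M T j -> Prop, exists V : (list M -> Prop) -> Prop,
    (forall X, (exists q, (A q /\ X = Wq I M T j q) \/ (~ A q /\ X = (fun l => ~ Wq I M T j q l))) -> V X) /\
    V (fun _ => True) /\
    (forall X Z, V X -> V Z -> exists y, X y /\ Z y) /\
    (forall X Z, V X -> (forall y, X y -> Z y) -> V Z) /\
    (forall X Z, V (fun y => X y \/ Z y) -> V X \/ V Z)).
  { intro A. apply ultra_exists.
    pose (Inv := fun l : list M => forall b, In b l -> exists q, A q /\ T j b = proj1_sig q).
    assert (negOK : forall l q, Inv l -> ~ A q -> ~ Wq I M T j q l).
    { intros l q Hl nq [b [Hb e]]. destruct (Hl b Hb) as [q' [Aq' e']].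
      assert (q = q') by (apply sig_eq; congruence). subst. auto. }
    assert (R0ok : forall l l' Z, Inv l' -> (forall b, In b l -> In b l') ->
       (exists q, (A q /\ Z = Wq I M T j q) \/ (~ A q /\ Z = (fun l => ~ Wq I M T j q l))) ->
       Z l -> Z l').
    { intros l l' Z Hl' sub [q [[Aq ->]|[nq ->]]] HZ.
      - destruct HZ as [b [Hb e]]. exists b. auto.
      - apply negOK; auto. }
    assert (aux : forall L : list (list M -> Prop),
      (forall Z, In Z L -> exists q, (A q /\ Z = Wq I M T j q) \/ (~ A q /\ Z = (fun l => ~ Wq I M T j q l))) ->
      exists l, Inv l /\ forall Z, In Z L -> Z l).
    { intro L. induction L as [|Z L IH]; intro HL.
      - exists nil. split; [intros b []|intros Z []].
      - destruct IH as [l [Hl HlL]]; [intros Z' HZ'; apply HL; right; auto|].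
        destruct (HL Z (or_introl eq_refl)) as [q [[Aq ->]|[nq ->]]].
        + assert (exists b, T j b = proj1_sig q) as [b0 e0] by (destruct q as [x px]; exact px).
          assert (Hl' : Inv (b0 :: l)).
          { intros b [<-|Hb]; [exists q; auto|apply Hl; auto]. }
          exists (b0 :: l). split; auto.
          intros Z' [<-|HZ'].
          * exists b0. split; [left; auto|auto].
          * apply (R0ok l (b0 :: l) Z' Hl'); [intros b Hb; right; auto | apply HL; right; auto | apply HlL; auto].
        + exists l. split; [exact Hl|]. intros Z' HZ'. destruct HZ' as [HZ'|HZ']; [subst Z'; exact (negOK l q Hl nq) | exact (HlL Z' HZ')]. }
    intros L HL. destruct (aux L HL) as [l [_ H]]. exists l. exact H. }
  exists (fun A => proj1_sig (constructive_indefinite_description _ (H A))).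
  split; [|split; [|split; [|split; [|split]]]]; intros A;
    destruct (proj2_sig (constructive_indefinite_description _ (H A))) as [h0 [h1 [h2 [h3 h4]]]].
  - exact h1.
  - exact h2.
  - exact h3.
  - exact h4.
  - intros q Aq. apply h0. exists q. left. auto.
  - intros q nq. apply h0. exists q. right. auto.
Qed.


Lemma mono1 {X : Type} (mu : (X -> Prop) -> R) (P A : X -> Prop) :
  fa_prob (@pow_set X) mu -> mu P = 1 -> (forall x, P x -> A x) -> mu A = 1.
Proof.
  intros Hf HP HPA.
  assert (Hinf : inf_field (@pow_set X)) by (repeat split).
  pose proof (fa_le1 _ mu A Hinf Hf I) as HA.
  destruct Hf as [H1 [H2 [H3 H4]]].
  assert (e : mu (fun x => P x \/ (A x /\ ~ P x)) = mu P + mu (fun x => A x /\ ~ P x)).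
  { apply H3; [exact I|exact I|]. intros x [a [_ b]]; auto. }
  assert (e2 : (fun x => P x \/ (A x /\ ~ P x)) = A).
  { apply set_ext. intro x. split; [intros [h|[h _]]; auto|]. intro h. destruct (classic (P x)); auto. }
  rewrite e2 in e. pose proof (H1 (fun x => A x /\ ~ P x) I). lra.
Qed.

Theorem corollary1 (I S : Type)
  (hI : exists i j : I, i <> j) (hS : exists s t : S, s <> t) :
  (forall (M : Type) (Sig : (M -> Prop) -> Prop)
          (T : I -> M -> Delta_inf M Sig) (theta : M -> S),
      ~ inf_universal I S M Sig T theta) /\
  (forall (M : Type) (T : I -> M -> (M -> Prop) -> R) (theta : M -> S),
      ~ star_universal I S M T theta).
Proof.
  destruct hI as [i [j hij]]. destruct hS as [s [t hst]].
  split.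
  - intros M Sig T theta Huniv.
    pose (Traw := fun k m => proj1_sig (T k m)).
    destruct (exists_U I M Traw j) as [U [HUT [HUI [HUS [HUU [HUpos HUneg]]]]]].
    destruct (proj1 Huniv) as [_ [Hfield [Hmeas [Hint Hth]]]].
    assert (Hintro : forall k m A, Sig A -> (forall x, Traw k x = Traw k m -> A x) -> Traw k m A = 1).
    { intros k m A HA H. apply Hint; auto. intros m' e. apply H. unfold Traw. rewrite e. reflexivity. }
    assert (HmeasT : forall k (B : ((M -> Prop) -> R) -> Prop), Sig (fun m => B (Traw k m))).
    { intros k B. apply (Hmeas k (fun mu => B (proj1_sig mu))). apply Delta_field_all. exact Hfield. }
    assert (Hmt : forall B : S -> Prop, Sig (fun m => B (theta m))).
    { intros B. apply Hth. exact Logic.I. }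
    exact (inf_case I S M Sig Traw theta i j s t hij hst Hfield
      (fun k m => proj2_sig (T k m)) Hintro HmeasT Hmt U HUT HUI HUS HUU HUpos HUneg
      T (fun k m => eq_refl) Huniv).
  - intros M T theta Huniv.
    destruct (exists_U I M T j) as [U [HUT [HUI [HUS [HUU [HUpos HUneg]]]]]].
    destruct (proj1 Huniv) as [[m0] [Hfa Hint]].
    assert (Hf : inf_field (@pow_set M)) by (repeat split).
    assert (Hintro : forall k m A, pow_set A -> (forall x, T k x = T k m -> A x) -> T k m A = 1).
    { intros k m A _ H. apply (mono1 _ (fun x => T k x = T k m)); auto. }
    exact (star_case I S M (@pow_set M) T theta i j s t hij hst Hf Hfa Hintro
      (fun _ _ => Logic.I) (fun _ => Logic.I) U HUT HUI HUS HUU HUpos HUneg m0 (fun _ => Logic.I) Huniv).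
Qed.
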